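(* Let $B$ be a bipartite caching graph with $K$ left (user) vertices and $F$ right (subfile) vertices which is bi-regular: every left vertex has degree $D=F(1-\frac{M}{N})$ and every right vertex has degree $d=K(1-\frac{M}{N})$, and assume the number of files satisfies $N\ge K(1-\frac{M}{N})$. Define $\rho_1=D$ and, for $j=2,\dots,d$, $\rho_j=\Big\lceil\frac{(d-j+1)\rho_{j-1}}{K-j+1}\Big\rceil$. Then the infimum $R^*$ of all achievable rates for the caching scheme defined by $B$ satisfies $$R^*F\ge\sum_{j=1}^{d}\rho_j= D+\Big\lceil\tfrac{(d-1)D}{K-1}\Big\rceil+\cdots+\Big\lceil\tfrac{1}{\frac{KM}{N}+1}\Big\lceil\tfrac{2}{\frac{KM}{N}+2}\Big\lceil\cdots\Big\lceil\tfrac{d-2}{K-2}\Big\lceil\tfrac{(d-1)D}{K-1}\Big\rceil\Big\rceil\cdots\Big\rceil\Big\rceil\Big\rceil.$$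
   Context: Coded caching setup: a server holds $N$ files, each consisting of $F$ subfiles that are independent and uniform over a finite abelian group (unit entropy each), connected by an error-free broadcast link to $K$ users each able to cache $M$ files. The bipartite caching graph $B$ defines the symmetric caching scheme in which user $k$ caches the $f$-th subfile of every file iff $\{k,f\}$ is not an edge, and caches no $f$-th subfile otherwise. Given this caching, a rate $R$ is achievable if a (possibly nonlinear) delivery scheme exists which, for every demand vector (each user demanding one file), broadcasts a message of total size $RF$ subfile units from which every user recovers its demanded file using its cache. *)

(* Defs.v *)
From mathcomp Require Import all_boot all_algebra.
From Stdlib Require Import Reals.
Set Implicit Arguments. Unset Strict Implicit. Unset Printing Implicit Defensive.

Definition cdivn (a b : nat) : nat := (a + b.-1) %/ b.

(* rho_seq K d D i = rho_{i+1}:  rho_1 = D,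
   rho_j = ceil((d-j+1) rho_{j-1} / (K-j+1))  for j >= 2. *)
Fixpoint rho_seq (K d D : nat) (i : nat) : nat :=
  match i with
  | 0 => D
  | i'.+1 => cdivn ((d - i) * rho_seq K d D i') (K - i)
  end.

Definition library (G : finType) (N F : nat) := {ffun 'I_N * 'I_F -> G}.

(* Cache content of user k under the caching graph e (e k f = edge {k,f}):
   user k holds subfile f of every file iff {k,f} is NOT an edge. *)
Definition cache_of (G : finType) (N K F : nat) (e : 'I_K -> 'I_F -> bool)
  (k : 'I_K) (W : library G N F) : {ffun 'I_N * 'I_F -> option G} :=
  [ffun nf => if e k nf.2 then None else Some (W nf)].

(* Rate r is achievable for the caching scheme of e: for every demand vector,
   there is a (possibly nonlinear) broadcast message of at most |G|^(rF)
   values (i.e. of size rF subfile units) from which every user k recovers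
   its demanded file from the message and its cache, for every library. *)
Definition achievable_rate (G : finType) (N K F : nat)
  (e : 'I_K -> 'I_F -> bool) (r : R) : Prop :=
  forall dem : 'I_K -> 'I_N,
  exists (m : nat) (enc : library G N F -> 'I_m)
         (dec : 'I_K -> 'I_m -> {ffun 'I_N * 'I_F -> option G} -> {ffun 'I_F -> G}),
    (INR m <= Rpower (INR #|G|) (r * INR F))%R /\
    forall (W : library G N F) (k : 'I_K),
      dec k (enc W) (cache_of e k W) = [ffun f => W (dem k, f)].

(* Main.v *)
Require Import Defs.
From mathcomp Require Import all_boot all_algebra.
From Stdlib Require Import Reals Lra.
From mathcomp Require Import zify.
Set Implicit Arguments. Unset Strict Implicit. Unset Printing Implicit Defensive.

Definition Sset (K F : nat) (e : 'I_K -> 'I_F -> bool) (s : seq 'I_K) : {set 'I_F} :=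
  [set f | all (fun u => e u f) s].

Lemma card_setI_sum (T : finType) (A : {set T}) (P : pred T) :
  #|A :&: [set x | P x]| = \sum_(x in A) (P x : nat).
Proof.
rewrite -sum1_card big_mkcond /= [RHS]big_mkcond /=.
apply: eq_bigr => x _; rewrite !inE.
by case: (x \in A); case: (P x).
Qed.

Lemma cdivn_le a b x : (0 < b)%N -> (a <= b * x)%N -> (cdivn a b <= x)%N.
Proof.
move=> b0 h; rewrite /cdivn -ltnS ltn_divLR //. nia.
Qed.

Lemma combB (K F : nat) (e : 'I_K -> 'I_F -> bool) (D d : nat) :
  (forall k, #|[set f | e k f]| = D) -> (forall f, #|[set k | e k f]| = d) ->
  (d <= K)%N ->
  forall j, (j <= d)%N -> exists us : seq 'I_K, [/\ uniq us, size us = j &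
     forall i, (i < j)%N -> (rho_seq K d D i <= #|Sset e (take i.+1 us)|)%N].
Proof.
move=> HD Hd dK; elim=> [|j IH] Hj.
  by exists [::].
have [us [Hu Hs Hp]] := IH (ltnW Hj).
case: j IH Hj Hs Hp => [|j] IH Hj Hs Hp.
  have K0 : (0 < K)%N by apply: leq_trans dK.
  exists [:: Ordinal K0]; split => // i; rewrite ltnS leqn0 => /eqP -> /=.
  rewrite -(HD (Ordinal K0)); apply/eq_leq; apply: eq_card => f.
  by rewrite /Sset !inE /= andbT.
set B := [set u in us].
set R := ~: B.
set S := Sset e us.
have cB : #|B| = j.+1 by rewrite cardsE -Hs; apply/card_uniqP.
have cR : #|R| = (K - j.+1)%N.
  have h := cardsC B; rewrite card_ord cB in h; rewrite /R; lia.
have Rpos : (0 < #|R|)%N by rewrite cR; lia.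
have Hsum : (\sum_(u in R) #|S :&: [set f | e u f]| = #|S| * (d - j.+1))%N.
  under eq_bigr do rewrite card_setI_sum.
  rewrite exchange_big /= -sum_nat_const.
  apply: eq_bigr => f fS.
  rewrite -card_setI_sum.
  have sub : B \subset [set k | e k f].
    apply/subsetP => u; rewrite !inE => uin.
    by move: fS; rewrite /S /Sset inE => /allP /(_ u uin).
  have := cardsID B [set k | e k f].
  rewrite (setIidPr sub) cB Hd setDE setIC /R => <-; lia.
have [umax umaxR Hmax] := eq_bigmax_cond (fun u => #|S :&: [set f | e u f]|) Rpos.
have Hle : (#|S| * (d - j.+1) <= #|R| * #|S :&: [set f | e umax f]|)%N.
  rewrite -Hsum -Hmax -sum_nat_const; apply: leq_sum => u uR.
  exact: leq_bigmax_cond.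
exists (rcons us umax); split.
- by rewrite rcons_uniq Hu andbT; move: umaxR; rewrite /R !inE.
- by rewrite size_rcons Hs.
- move=> i; rewrite ltnS leq_eqVlt => /orP [/eqP ->|ilt].
    rewrite take_oversize ?size_rcons ?Hs //=.
    have -> : Sset e (rcons us umax) = S :&: [set f | e umax f].
      by apply/setP => f; rewrite !inE all_rcons andbC.
    have Hpj := Hp j (ltnSn j).
    rewrite -Hs take_size -/S in Hpj.
    apply: cdivn_le; first by rewrite -cR.
    rewrite -cR; apply: leq_trans Hle; rewrite mulnC; apply: leq_mul => //.
  rewrite -cats1 takel_cat ?Hs //; exact: Hp.
Qed.

Lemma expn_pow a b : expn a b = Nat.pow a b.
Proof. by elim: b => [|b IH] //; rewrite expnS IH. Qed.

Lemma infoA (G : finZmodType) (N K F : nat) (e : 'I_K -> 'I_F -> bool) (r : R)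
  (us : seq 'I_K) : (1 < #|G|)%N -> uniq us -> (size us <= N)%N -> (0 < N)%N ->
  @achievable_rate G N K F e r ->
  (INR (\sum_(i < size us) #|Sset e (take i.+1 us)|) <= r * INR F)%R.
Proof.
move=> G1 Hu HsN; case: N HsN => [//|N] HsN _ Hach.
set n := size us.
pose dem := fun u : 'I_K => (inord (index u us) : 'I_N.+1).
have [m [enc [dec [Hm Hdec]]]] := Hach dem.
pose V : {set 'I_N.+1 * 'I_F} := [set x : 'I_N.+1 * 'I_F | (x.1 < n)%N && (x.2 \in Sset e (take x.1.+1 us))].
pose phi := fun g : {ffun {x | x \in V} -> G} =>
  ([ffun x => odflt (@GRing.zero G) (omap g (insub x))] : library G N.+1 F).
have phi_out : forall g x, x \notin V -> phi g x = @GRing.zero G.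
  by move=> g x xV; rewrite /phi ffunE insubF //; apply/negbTE.
have inj : injective (fun g => enc (phi g)).
  move=> g g' /= Heq.
  have P : forall i, (i < n)%N -> forall f, phi g (inord i, f) = phi g' (inord i, f).
    elim/ltn_ind => i IH Hi f.
    have u0 : 'I_K by move: Hi; rewrite /n; case: (us) => [|a ?] // _; exact: a.
    set u := nth u0 us i.
    have Hdem : dem u = inord i by rewrite /dem /u index_uniq.
    have Hc : cache_of e u (phi g) = cache_of e u (phi g').
      apply/ffunP => -[a f']; rewrite !ffunE /=.
      case Euf: (e u f') => //; congr Some.
      case: (boolP ((a, f') \in V)) => HV; last by rewrite !insubF //; apply/negbTE.
      move: HV; rewrite inE /= => /andP [an].
      rewrite /Sset inE => Hall.
      have ai : (a < i)%N.
        rewrite ltnNge; apply/negP => ia.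
        have : u \in take a.+1 us.
          rewrite /u -(nth_take u0 (n0:=a.+1)) //; apply: mem_nth.
          by rewrite size_take; case: ifP => _ //; lia.
        by move/(allP Hall); rewrite Euf.
      by have := IH a ai an f'; rewrite /phi !ffunE inord_val.
    have E1 := Hdec (phi g) u; have E2 := Hdec (phi g') u.
    rewrite Heq Hc E2 Hdem in E1.
    by move/ffunP: E1 => /(_ f); rewrite !ffunE.
  apply/ffunP => y.
  have yV := valP y.
  move: (yV); rewrite inE => /andP [y1 _].
  have := P _ y1 (val y).2.
  rewrite inord_val -surjective_pairing /phi !ffunE valK //.
have Hcard : (expn #|G| #|V| <= m)%N.
  have := leq_card _ inj; rewrite card_ffun card_sig card_ord.
  apply: leq_trans; apply: eq_leq; congr expn; apply: eq_card => x; by rewrite !inE.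
have HV : #|V| = (\sum_(i < n) #|Sset e (take i.+1 us)|)%N.
  transitivity (\sum_(a : 'I_N.+1) \sum_(f : 'I_F)
     (((a < n)%N && (f \in Sset e (take a.+1 us))) : nat)).
    rewrite -sum1_card big_mkcond pair_big /=.
    by apply: eq_bigr => -[a f] _; rewrite inE /=; case: (_ && _).
  rewrite /n (big_ord_widen _ (fun i => #|Sset e (take i.+1 us)|) HsN) [RHS]big_mkcond /=; apply: eq_bigr => a _.
  case: ifP => an /=.
    rewrite -sum1_card [RHS]big_mkcond /=; apply: eq_bigr => f _.
    by case: (_ \in _).
  by rewrite big1.
rewrite -HV.
have x1 : (1 < INR #|G|)%R by have := lt_INR 1 #|G| (@ltP _ _ G1); rewrite /=.
have Hpow : INR (expn #|G| #|V|) = (INR #|G| ^ #|V|)%R by rewrite -pow_INR expn_pow.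
have Hmn : (INR (expn #|G| #|V|) <= INR m)%R by apply: le_INR; apply/leP.
rewrite -Rpower_pow in Hpow; last lra.
apply: Rnot_lt_le => Hlt.
have := Rpower_lt _ _ _ x1 Hlt.
move=> h; have h2 := Rle_trans _ _ _ Hmn Hm; rewrite Hpow in h2; exact: (Rlt_not_le _ _ h h2).
Qed.

Theorem theorem9 (G : finZmodType) (N K F : nat) (M : R)
  (e : 'I_K -> 'I_F -> bool) (D d : nat) :
  (1 < #|G|)%N ->
  (0 < N)%N ->
  INR D = (INR F * (1 - M / INR N))%R ->
  INR d = (INR K * (1 - M / INR N))%R ->
  (forall k : 'I_K, #|[set f | e k f]| = D) ->
  (forall f : 'I_F, #|[set k | e k f]| = d) ->
  (INR K * (1 - M / INR N) <= INR N)%R ->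
  forall r : R, @achievable_rate G N K F e r ->
  (INR (\sum_(i < d) rho_seq K d D i) <= r * INR F)%R.
Proof.
move=> G1 N0 HD Hd cD cd HKN r Hach.
have dN : (d <= N)%N by apply/leP; apply: INR_le; rewrite Hd; exact: HKN.
case: (posnP F) => [F0|Fpos].
  have D0 : D = 0%N by apply: INR_eq; rewrite HD F0 /=; ring.
  have rz : forall i, rho_seq K d 0 i = 0%N.
    elim=> [|i IH] //=; rewrite IH muln0 /cdivn.
    by case: (K - i.+1)%N => [|k] //=; rewrite divn_small.
  rewrite D0 big1 // F0 /=; lra.
have dK : (d <= K)%N.
  by rewrite -(cd (Ordinal Fpos)); apply: leq_trans (max_card _) _; rewrite card_ord.
have [us [Hu Hs Hp]] := combB cD cd dK (leqnn d).
have dN' : (size us <= N)%N by rewrite Hs.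
have := infoA G1 Hu dN' N0 Hach; rewrite Hs; apply: Rle_trans.
apply: le_INR; apply/leP; apply: leq_sum => i _; exact: Hp.
Qed.
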